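(* Let $\Bbbk$ be a field of characteristic $0$ and $X$ a set. Then $\mathrm{DiSJ}\langle X\rangle$ is the free dialgebra on $X$ in the class $\mathrm{HomDiSJ}$: it belongs to $\mathrm{HomDiSJ}$, and for every $J'\in\mathrm{HomDiSJ}$ every map $X\to J'$ extends to a homomorphism $\mathrm{DiSJ}\langle X\rangle\to J'$.
   Context: An associative dialgebra is a vector space with bilinear $\vdash,\dashv$ satisfying $(x\dashv y)\vdash z=(x\vdash y)\vdash z$, $x\dashv(y\vdash z)=x\dashv(y\dashv z)$, $(x\vdash y)\vdash z=x\vdash(y\vdash z)$, $(x\dashv y)\dashv z=x\dashv(y\dashv z)$, $(x\vdash y)\dashv z=x\vdash(y\dashv z)$; $\mathrm{DiAs}\langle X\rangle$ is the free associative dialgebra. $D^{(+)}$ is $D$ with $a\vdash_+b=\tfrac12(a\vdash b+b\dashv a)$, $a\dashv_+b=\tfrac12(a\dashv b+b\vdash a)$. $\mathrm{DiSJ}\langle X\rangle$ is the subdialgebra of $\mathrm{DiAs}\langle X\rangle^{(+)}$ generated by $X$. A special Jordan dialgebra is a subdialgebra of some $D^{(+)}$ with $D$ associative; $\mathrm{HomDiSJ}$ is the class of homomorphic images of special Jordan dialgebras. *)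

(* Defs.v *)
From HB Require Import structures.
From mathcomp Require Import all_boot all_order all_algebra.
Set Implicit Arguments. Unset Strict Implicit. Unset Printing Implicit Defensive.
Import GRing.Theory.
Local Open Scope ring_scope.

(* A dialgebra is represented as a subspace S of an ambient k-vector space V,
   together with two operations  dl (= "|-")  and  dr (= "-|").  The operations
   only matter on S.  A dialgebra in the usual sense is the case S = everything. *)
Record dialg (k : fieldType) := Dialg {
  dcar : lmodType k;
  dsub : dcar -> Prop;
  dl : dcar -> dcar -> dcar;
  dr : dcar -> dcar -> dcar
}.
Arguments Dialg {k}.
Arguments dcar {k} d.
Arguments dsub {k} d _.
Arguments dl {k} d _ _.
Arguments dr {k} d _ _.

Section DefsSec.
Variable k : fieldType.

Definition closed_dialg (J : dialg k) : Prop :=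
  dsub J 0 /\
  (forall (a : k) x y, dsub J x -> dsub J y -> dsub J (a *: x + y)) /\
  (forall x y, dsub J x -> dsub J y -> dsub J (dl J x y)) /\
  (forall x y, dsub J x -> dsub J y -> dsub J (dr J x y)).

Definition is_dialg (J : dialg k) : Prop :=
  closed_dialg J /\
  (forall (a : k) x y z, dsub J x -> dsub J y -> dsub J z ->
     dl J (a *: x + y) z = a *: dl J x z + dl J y z /\
     dl J z (a *: x + y) = a *: dl J z x + dl J z y /\
     dr J (a *: x + y) z = a *: dr J x z + dr J y z /\
     dr J z (a *: x + y) = a *: dr J z x + dr J z y).

Definition is_assoc_dialg (J : dialg k) : Prop :=
  is_dialg J /\
  forall x y z, dsub J x -> dsub J y -> dsub J z ->
    dl J (dr J x y) z = dl J (dl J x y) z /\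
    dr J x (dl J y z) = dr J x (dr J y z) /\
    dl J (dl J x y) z = dl J x (dl J y z) /\
    dr J (dr J x y) z = dr J x (dr J y z) /\
    dr J (dl J x y) z = dl J x (dr J y z).

(* homomorphism of dialgebras J1 -> J2 (given as a map on the ambient space,
   only its values on dsub J1 matter) *)
Definition dialg_hom (J1 J2 : dialg k) (f : dcar J1 -> dcar J2) : Prop :=
  (forall x, dsub J1 x -> dsub J2 (f x)) /\
  (forall (a : k) x y, dsub J1 x -> dsub J1 y -> f (a *: x + y) = a *: f x + f y) /\
  (forall x y, dsub J1 x -> dsub J1 y -> f (dl J1 x y) = dl J2 (f x) (f y)) /\
  (forall x y, dsub J1 x -> dsub J1 y -> f (dr J1 x y) = dr J2 (f x) (f y)).
Arguments dialg_hom : clear implicits.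

Definition full_dialg (V : lmodType k) (l r : V -> V -> V) : dialg k :=
  Dialg V (fun _ => True) l r.

(* the subset S of D^(+):  a |-_+ b = 1/2 (a |- b + b -| a),
                           a -|_+ b = 1/2 (a -| b + b |- a) *)
Definition plus_dialg (V : lmodType k) (l r : V -> V -> V) (S : V -> Prop) : dialg k :=
  Dialg V S (fun a b => 2%:R^-1 *: (l a b + r b a))
            (fun a b => 2%:R^-1 *: (r a b + l b a)).

Definition is_free_DiAs (X : Type) (D : lmodType k) (l r : D -> D -> D)
    (iota : X -> D) : Prop :=
  is_assoc_dialg (full_dialg l r) /\
  forall (A : lmodType k) (al ar : A -> A -> A),
    is_assoc_dialg (full_dialg al ar) ->
    forall g : X -> A,
      exists! h : D -> A,
        dialg_hom (full_dialg l r) (full_dialg al ar) h /\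
        forall x, h (iota x) = g x.

Definition gen_plus (V : lmodType k) (l r : V -> V -> V) (E : V -> Prop) : V -> Prop :=
  fun v => forall P : V -> Prop,
    closed_dialg (plus_dialg l r P) -> (forall e, E e -> P e) -> P v.

Definition DiSJ (X : Type) (D : lmodType k) (l r : D -> D -> D) (iota : X -> D) : dialg k :=
  plus_dialg l r (gen_plus l r (fun v => exists x, v = iota x)).

(* HomDiSJ: homomorphic images of special Jordan dialgebras, i.e. of
   subdialgebras of A^(+) with A an associative dialgebra *)
Definition HomDiSJ (J : dialg k) : Prop :=
  is_dialg J /\
  exists (A : lmodType k) (l r : A -> A -> A) (S : A -> Prop),
    is_assoc_dialg (full_dialg l r) /\
    is_dialg (plus_dialg l r S) /\
    exists f : A -> dcar J,
      dialg_hom (plus_dialg l r S) J f /\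
      (forall y, dsub J y -> exists x, S x /\ f x = y).

End DefsSec.
Arguments dialg_hom {k} J1 J2 f.

(* Main.v *)
Require Import Defs.
From HB Require Import structures.
From mathcomp Require Import all_boot all_order all_algebra.
From Stdlib Require Import ClassicalEpsilon.
Local Open Scope ring_scope.
Import GRing.Theory.

Section Aux.
Variable k : fieldType.

Lemma lin_split (V : lmodType k) (c a : k) (p q u w : V) :
  c *: (a *: p + q + (a *: u + w)) = a *: (c *: (p + u)) + c *: (q + w).
Proof. by rewrite !scalerDr !scalerA [c * a]mulrC addrACA. Qed.

Lemma plus_is_dialg (V : lmodType k) (l r : V -> V -> V) (S : V -> Prop) :
  is_dialg (full_dialg l r) -> closed_dialg (plus_dialg l r S) ->
  is_dialg (plus_dialg l r S).
Proof.
move=> [_ Hb] Hc; split => // a x y z _ _ _ /=.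
have [h1 [h2 [h3 h4]]] := Hb a x y z I I I.
simpl in h1, h2, h3, h4.
by rewrite h1 h4 h2 h3 !lin_split.
Qed.

Lemma gen_closed (V : lmodType k) (l r : V -> V -> V) (E : V -> Prop) :
  closed_dialg (plus_dialg l r (gen_plus l r E)).
Proof.
split; [|split; [|split]] => /=.
- by move=> P [H0 _] _.
- by move=> a x y Hx Hy P HP HE; have [_ [H _]] := HP; apply: H; [apply: Hx|apply: Hy].
- by move=> x y Hx Hy P HP HE; have [_ [_ [H _]]] := HP; apply: H; [apply: Hx|apply: Hy].
- by move=> x y Hx Hy P HP HE; have [_ [_ [_ H]]] := HP; apply: H; [apply: Hx|apply: Hy].
Qed.

Lemma hom_lin (A B : lmodType k) (h : A -> B) :
  (forall (a : k) x y, h (a *: x + y) = a *: h x + h y) ->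
  h 0 = 0 /\ (forall a x, h (a *: x) = a *: h x) /\ (forall x y, h (x + y) = h x + h y).
Proof.
move=> H.
have h0 : h 0 = 0.
  have := H 1 0 0; rewrite scaler0 addr0 scale1r => E.
  by apply: (addrI (h 0)); rewrite addr0 -E.
split => //; split.
- by move=> a x; have := H a x 0; rewrite !addr0 h0 addr0.
- by move=> x y; have := H 1 x y; rewrite !scale1r.
Qed.

End Aux.

Theorem mainTheorem17 (k : fieldType) (hk : [pchar k] =i pred0)
    (X : Type) (D : lmodType k) (l r : D -> D -> D) (iota : X -> D)
    (hfree : is_free_DiAs l r iota) :
  HomDiSJ (DiSJ l r iota) /\
  forall J' : dialg k, HomDiSJ J' ->
    forall g : X -> dcar J', (forall x, dsub J' (g x)) ->
      exists h : D -> dcar J',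
        dialg_hom (DiSJ l r iota) J' h /\ forall x, h (iota x) = g x.
Proof.
have [Has Hu] := hfree.
have Hd : is_dialg (DiSJ l r iota).
  by apply: plus_is_dialg; [case: Has | apply: gen_closed].
split.
  split => //.
  exists D, l, r, (gen_plus l r (fun v => exists x, v = iota x)).
  split => //; split => //.
  exists id; split; last by move=> y Hy; exists y.
  by split; [|split; [|split]].
move=> J' [_ [A [l' [r' [S [HA [HS [f [[fS [fl [fdl fdr]]] fsurj]]]]]]]]] g Hg.
have pre : forall x, {a | S a /\ f a = g x}.
  by move=> x; apply: constructive_indefinite_description; apply: fsurj.
have [h0 [[[_ [h0l [h0dl h0dr]]] h0i] _]] := Hu A l' r' HA (fun x => proj1_sig (pre x)).
simpl in h0l, h0dl, h0dr.
have h0l' : forall a x y, h0 (a *: x + y) = a *: h0 x + h0 y by move=> a x y; apply: h0l.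
have [hz [hs ha]] := @hom_lin k _ _ _ h0l'.
have [[S0 [Sl [Sdl Sdr]]] _] := HS.
simpl in S0, Sl, Sdl, Sdr.
have hdl : forall x y, h0 (2%:R^-1 *: (l x y + r y x)) = 2%:R^-1 *: (l' (h0 x) (h0 y) + r' (h0 y) (h0 x)).
  by move=> x y; rewrite hs ha (h0dl x y I I) (h0dr y x I I).
have hdr : forall x y, h0 (2%:R^-1 *: (r x y + l y x)) = 2%:R^-1 *: (r' (h0 x) (h0 y) + l' (h0 y) (h0 x)).
  by move=> x y; rewrite hs ha (h0dl y x I I) (h0dr x y I I).
have Hgen : forall v, gen_plus l r (fun v => exists x, v = iota x) v -> S (h0 v).
  move=> v Hv; apply: (Hv (fun v => S (h0 v))).
  - split; [|split; [|split]] => /=.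
    + by rewrite hz.
    + by move=> a x y Hx Hy; rewrite h0l'; apply: Sl.
    + by move=> x y Hx Hy; rewrite hdl; apply: Sdl.
    + by move=> x y Hx Hy; rewrite hdr; apply: Sdr.
  - by move=> e [x ->]; rewrite h0i; case: (proj2_sig (pre x)).
exists (fun v => f (h0 v)); split.
  split; [|split; [|split]] => /=.
  - by move=> x Hx; apply: fS; apply: Hgen.
  - by move=> a x y Hx Hy; rewrite h0l'; apply: fl; apply: Hgen.
  - by move=> x y Hx Hy; rewrite hdl; apply: fdl; apply: Hgen.
  - by move=> x y Hx Hy; rewrite hdr; apply: fdr; apply: Hgen.
by move=> x; rewrite h0i; case: (proj2_sig (pre x)).
Qed.
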